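(* Let $R$ be a complete discrete valuation ring of characteristic $p>0$ with uniformizer $\pi$, field of fractions $K$, and normalized valuation $v_K$. Let $H$ be a primitively generated $K$-Hopf algebra of rank $p^2$, $t_1,t_2$ a $K$-basis of $\mathrm{Prim}(H)$ with associated matrix $B$. Let \[\Theta=\begin{pmatrix}\pi^i&0\\ \theta&\pi^j\end{pmatrix},\qquad \Theta'=\begin{pmatrix}\pi^{i'}&0\\ \theta'&\pi^{j'}\end{pmatrix},\] with $i,j,i',j'\in\mathbb{Z}$, $\theta,\theta'\in K$, $v_K(\theta)\le j$, $v_K(\theta')\le j'$, and suppose $\Theta^{-1}B\Theta^{(p)}$ and $\Theta'^{-1}B\Theta'^{(p)}$ both lie in $M_2(R)$. Then $\Theta$ and $\Theta'$ give the same Hopf order, i.e. $R[\pi^it_1+\theta t_2,\ \pi^jt_2]=R[\pi^{i'}t_1+\theta' t_2,\ \pi^{j'}t_2]$ as subalgebras of $H$, if and only if $i=i'$, $j=j'$, and $v_K(\theta-\theta')\ge j$.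
   Context: $\Theta^{(p)}$ denotes the matrix obtained by raising each entry of $\Theta$ to the $p$-th power. $t$ is primitive if $\Delta(t)=t\otimes1+1\otimes t$; $\mathrm{Prim}(H)$ is the module of primitives; $H$ is primitively generated if generated as an algebra by its primitives. The associated matrix $B=(b_{j,i})$ is defined by $t_i^p=\sum_j b_{j,i}t_j$. When $\Theta=(\theta_{j,i})\in\mathrm{GL}_2(K)$ satisfies $\Theta^{-1}B\Theta^{(p)}\in M_2(R)$, the Hopf order given by $\Theta$ is the $R$-subalgebra $R[\theta_{1,1}t_1+\theta_{2,1}t_2,\ \theta_{1,2}t_1+\theta_{2,2}t_2]$ of $H$, which is an $R$-Hopf order in $H$ (a finitely generated projective $R$-submodule that is an $R$-Hopf algebra under the inherited operations and spans $H$ over $K$). *)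

(* Defs.v *)
From HB Require Import structures.
From mathcomp Require Import all_boot all_order all_algebra all_field.
Set Implicit Arguments. Unset Strict Implicit. Unset Printing Implicit Defensive.
Import Order.TTheory GRing.Theory Num.Theory.
Local Open Scope ring_scope.

(* Discrete valuations.  v is only meaningful on nonzero elements;     *)
(* v 0 = +oo is encoded by the predicates vge / vle below.            *)
Section Valuation.
Variable K : fieldType.

Definition vge (v : K -> int) (x : K) (n : int) : Prop := x = 0 \/ n <= v x.
Definition vle (v : K -> int) (x : K) (n : int) : Prop := x <> 0 /\ v x <= n.

Record complete_dvr (v : K -> int) (pi : K) : Prop := {
  dvr_mul : forall x y, x != 0 -> y != 0 -> v (x * y) = v x + v y;
  dvr_add : forall x y, x != 0 -> y != 0 -> x + y != 0 ->
              Num.min (v x) (v y) <= v (x + y);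
  dvr_pi_neq0 : pi != 0;
  dvr_pi : v pi = 1;
  dvr_complete : forall u : nat -> K,
    (forall N : int, exists M : nat, forall m n : nat,
        (M <= m)%N -> (M <= n)%N -> vge v (u m - u n) N) ->
    exists l : K, forall N : int, exists M : nat, forall n : nat,
        (M <= n)%N -> vge v (u n - l) N
}.

Definition inR (v : K -> int) (x : K) : Prop := vge v x 0.

End Valuation.

(* An element of H (x) H is represented by a finite list of pure       *)
(* tensors sum_k a_k (x) b_k; two such lists represent the same tensor  *)
(* iff they agree under every pair of linear functionals (H is finite  *)
(* dimensional, so pairs of functionals separate H (x) H).             *)
Section Hopf.
Variables (K : fieldType) (H : falgType K).

Definition tensor := seq (H * H).

Definition tpair (f g : 'Hom(H, K^o)) (s : tensor) : K :=
  \sum_(u <- s) (f u.1 : K) * (g u.2 : K).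

Definition teq (s t : tensor) : Prop :=
  forall f g : 'Hom(H, K^o), tpair f g s = tpair f g t.

Definition tmul (s t : tensor) : tensor :=
  [seq (u.1 * w.1, u.2 * w.2) | u <- s, w <- t].

Definition tscale (a : K) (s : tensor) : tensor := [seq (a *: u.1, u.2) | u <- s].

Record is_hopf (Delta : H -> tensor) (eps : H -> K) (S : H -> H) : Prop := {
  hopf_Delta_lin : forall a x y, teq (Delta (a *: x + y)) (tscale a (Delta x) ++ Delta y);
  hopf_Delta_mul : forall x y, teq (Delta (x * y)) (tmul (Delta x) (Delta y));
  hopf_Delta_1 : teq (Delta 1) [:: (1, 1)];
  hopf_eps_lin : forall a x y, eps (a *: x + y) = a * eps x + eps y;
  hopf_eps_mul : forall x y, eps (x * y) = eps x * eps y;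
  hopf_eps_1 : eps 1 = 1;
  hopf_S_lin : forall a x y, S (a *: x + y) = a *: S x + S y;
  hopf_coassoc : forall x (f g h : 'Hom(H, K^o)),
    \sum_(u <- Delta x) tpair f g (Delta u.1) * (h u.2 : K) =
    \sum_(u <- Delta x) (f u.1 : K) * tpair g h (Delta u.2);
  hopf_counit_l : forall x, \sum_(u <- Delta x) eps u.1 *: u.2 = x;
  hopf_counit_r : forall x, \sum_(u <- Delta x) eps u.2 *: u.1 = x;
  hopf_antipode_l : forall x, \sum_(u <- Delta x) S u.1 * u.2 = eps x *: 1;
  hopf_antipode_r : forall x, \sum_(u <- Delta x) u.1 * S u.2 = eps x *: 1
}.

Definition primitive (Delta : H -> tensor) (t : H) : Prop :=
  teq (Delta t) [:: (t, 1); (1, t)].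

Definition primitively_generated (Delta : H -> tensor) : Prop :=
  exists s : seq H, (forall t, t \in s -> primitive Delta t) /\
                    agenv (<<s>>%VS) = fullv.

Inductive Rsubalg (Rp : K -> Prop) (x y : H) : H -> Prop :=
| Rsubalg_x : Rsubalg Rp x y x
| Rsubalg_y : Rsubalg Rp x y y
| Rsubalg_scal r : Rp r -> Rsubalg Rp x y (r%:A)
| Rsubalg_add a b : Rsubalg Rp x y a -> Rsubalg Rp x y b -> Rsubalg Rp x y (a + b)
| Rsubalg_mul a b : Rsubalg Rp x y a -> Rsubalg Rp x y b -> Rsubalg Rp x y (a * b).

End Hopf.

Definition Theta_mx (K : fieldType) (pi : K) (i j : int) (th : K) : 'M[K]_2 :=
  \matrix_(a < 2, b < 2)
    if (a == 0 :> nat) then (if (b == 0 :> nat) then pi ^ i else 0)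
    else (if (b == 0 :> nat) then th else pi ^ j).

Definition integral_cond (K : fieldType) (v : K -> int) (p : nat)
    (B Th : 'M[K]_2) : Prop :=
  forall a b, inR v ((invmx Th *m B *m map_mx (fun x => x ^+ p) Th) a b).

(* Main.v *)
Require Import Defs.
From HB Require Import structures.
From mathcomp Require Import all_boot all_order all_algebra all_field.
From mathcomp Require Import zify ring.
Import Order.TTheory GRing.Theory Num.Theory.
Local Open Scope ring_scope.

Section Val.
Variables (K : fieldType) (v : K -> int) (pi : K).
Hypothesis hv : complete_dvr v pi.

Lemma v1 : v 1 = 0.
Proof.
have h := dvr_mul hv (oner_neq0 K) (oner_neq0 K).
rewrite mulr1 in h. have : v 1 + v 1 - v 1 = v 1 - v 1 by rewrite -h.
by rewrite addrK subrr.
Qed.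

Lemma vN1 : v (-1) = 0.
Proof.
have n1 : (-1 : K) != 0 by rewrite oppr_eq0 oner_neq0.
have h := dvr_mul hv n1 n1.
rewrite mulrNN mulr1 v1 in h. lia.
Qed.

Lemma vinv y : y != 0 -> v (y^-1) = - v y.
Proof.
move=> y0; have h := dvr_mul hv y0 (invr_neq0 y0).
rewrite mulfV // v1 in h. lia.
Qed.

Lemma vpiX (n : nat) : v (pi ^+ n) = n.
Proof.
elim: n => [|n IH]; first by rewrite expr0 v1.
rewrite exprS (dvr_mul hv) ?expf_neq0 ?(dvr_pi_neq0 hv) // IH (dvr_pi hv). lia.
Qed.

Lemma vpiz (n : int) : v (pi ^ n) = n.
Proof.
case: n => n; first exact: vpiX.
rewrite /exprz vinv ?expf_neq0 ?(dvr_pi_neq0 hv) // vpiX. by rewrite NegzE.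
Qed.

Lemma inR0 : inR v 0. Proof. by left. Qed.
Lemma inR1 : inR v 1. Proof. by right; rewrite v1. Qed.
Lemma inRD a b : inR v a -> inR v b -> inR v (a + b).
Proof.
case=> [->|ha]; first by rewrite add0r.
case=> [->|hb]; first by rewrite addr0; right.
have [a0|a0] := eqVneq a 0; first by rewrite a0 add0r; right.
have [b0|b0] := eqVneq b 0; first by rewrite b0 addr0; right.
have [ab0|ab0] := eqVneq (a + b) 0; first by left.
right; apply: le_trans (dvr_add hv a0 b0 ab0).
by rewrite le_min ha hb.
Qed.
Lemma inRM a b : inR v a -> inR v b -> inR v (a * b).
Proof.
case=> [->|ha]; first by rewrite mul0r; left.
case=> [->|hb]; first by rewrite mulr0; left.
have [a0|a0] := eqVneq a 0; first by rewrite a0 mul0r; left.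
have [b0|b0] := eqVneq b 0; first by rewrite b0 mulr0; left.
right; rewrite (dvr_mul hv) //. lia.
Qed.
Lemma inRN1 : inR v (-1). Proof. by right; rewrite vN1. Qed.

Lemma inR_div c (n : int) : inR v (c / pi ^ n) <-> vge v c n.
Proof.
have pn : pi ^ n != 0 by rewrite expfz_neq0 // (dvr_pi_neq0 hv).
have [->|c0] := eqVneq c 0; first by rewrite mul0r; split=> _; left.
rewrite /inR /vge (dvr_mul hv) ?invr_neq0 // vinv // vpiz.
split; case=> [/eqP|h]; rewrite ?mulf_eq0 ?(negPf c0) ?invr_eq0 ?(negPf pn) //;
  right; lia.
Qed.

End Val.

Section Gen.
Variables (K : fieldType) (H : falgType K).
Hypothesis Hcomm : forall x y : H, x * y = y * x.
Variable p : nat.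
Hypothesis p_gt1 : (1 < p)%N.
Variable Rp : K -> Prop.
Hypotheses (Rp0 : Rp 0) (Rp1 : Rp 1)
  (RpD : forall a b, Rp a -> Rp b -> Rp (a + b))
  (RpM : forall a b, Rp a -> Rp b -> Rp (a * b)).
Variables (u1 u2 : H) (c d e f : K).
Hypotheses (Rc : Rp c) (Rd : Rp d) (Re : Rp e) (Rf : Rp f)
  (hu1 : u1 ^+ p = c *: u1 + d *: u2) (hu2 : u2 ^+ p = e *: u1 + f *: u2).

Definition mon (k : nat) : H := u1 ^+ (k %/ p) * u2 ^+ (k %% p).

Definition RS (z : H) := exists g : 'I_(p * p) -> K,
  (forall k, Rp (g k)) /\ z = \sum_(k < p * p) g k *: mon k.

Lemma RS0 : RS 0.
Proof. by exists (fun=> 0); split=> //; rewrite big1 // => k _; rewrite scale0r. Qed.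

Lemma RSD z w : RS z -> RS w -> RS (z + w).
Proof.
move=> [g [hg ->]] [h [hh ->]]; exists (fun k => g k + h k); split=> [k|]; first exact: RpD.
by rewrite -big_split /=; apply: eq_bigr => k _; rewrite scalerDl.
Qed.

Lemma RSZ r z : Rp r -> RS z -> RS (r *: z).
Proof.
move=> hr [g [hg ->]]; exists (fun k => r * g k); split=> [k|]; first exact: RpM.
by rewrite scaler_sumr; apply: eq_bigr => k _; rewrite scalerA.
Qed.

Lemma RS_mon k : (k < p * p)%N -> RS (mon k).
Proof.
move=> hk; exists (fun i => if val i == k then 1 else 0); split=> [i|].
  by case: ifP.
rewrite (bigD1 (Ordinal hk)) //= eqxx scale1r big1 ?addr0 // => i ne.
rewrite ifN ?scale0r //; apply: contra ne => /eqP ei; apply/eqP/val_inj; exact: ei.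
Qed.

Lemma RS_sum (I : finType) (F : I -> H) : (forall i, RS (F i)) -> RS (\sum_i F i).
Proof. by move=> hF; apply: big_ind => //; [exact: RS0 | exact: RSD]. Qed.

Lemma mon_ab a b : (b < p)%N -> mon (a * p + b) = u1 ^+ a * u2 ^+ b.
Proof.
have p0 : (0 < p)%N by apply: ltn_trans p_gt1.
move=> hb; rewrite /mon divnMDl // modnMDl divn_small // modn_small //.
by rewrite addn0.
Qed.

Lemma RS_ab a b : (a < p)%N -> (b < p)%N -> RS (u1 ^+ a * u2 ^+ b).
Proof. move=> ha hb; rewrite -mon_ab //; apply: RS_mon; nia. Qed.

Lemma RS_u1 : RS u1.
Proof. by have := RS_ab 1 0 p_gt1 (ltn_trans (ltnSn 0) p_gt1); rewrite expr1 expr0 mulr1. Qed.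
Lemma RS_u2 : RS u2.
Proof. by have := RS_ab 0 1 (ltn_trans (ltnSn 0) p_gt1) p_gt1; rewrite expr1 expr0 mul1r. Qed.

Lemma RS_mon_split (k : 'I_(p * p)) (P : H -> Prop) :
  (forall a b, (a < p)%N -> (b < p)%N -> P (u1 ^+ a * u2 ^+ b)) -> P (mon k).
Proof.
have p0 : (0 < p)%N by apply: ltn_trans p_gt1.
move=> hP; apply: hP; last by rewrite ltn_pmod.
by rewrite ltn_divLR // ltn_ord.
Qed.

Lemma RS_u1pow a : (a <= p)%N -> RS (u1 ^+ a).
Proof.
rewrite leq_eqVlt => /orP[/eqP ->|ha]; first by rewrite hu1; apply: RSD; apply: RSZ => //; [exact: RS_u1|exact: RS_u2].
by have := RS_ab a 0 ha (ltn_trans (ltnSn 0) p_gt1); rewrite expr0 mulr1.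
Qed.

Lemma RS_mulu2 z : RS z -> RS (u2 * z).
Proof.
move=> [g [hg ->]]; rewrite mulr_sumr; apply: RS_sum => k.
rewrite -scalerAr; apply: RSZ => //; apply: (RS_mon_split k (fun m => RS (u2 * m))) => a b ha hb /=.
rewrite mulrA [u2 * _]Hcomm -mulrA -exprS.
move: hb; rewrite leq_eqVlt => /orP[/eqP hb|hb]; last exact: RS_ab.
rewrite hb hu2 mulrDr -!scalerAr; apply: RSD; apply: RSZ => //.
  by rewrite -exprSr; apply: RS_u1pow.
by have := RS_ab a 1 ha p_gt1; rewrite expr1.
Qed.

Lemma RS_mulu1 z : RS z -> RS (u1 * z).
Proof.
move=> [g [hg ->]]; rewrite mulr_sumr; apply: RS_sum => k.
rewrite -scalerAr; apply: RSZ => //; apply: (RS_mon_split k (fun m => RS (u1 * m))) => a b ha hb /=.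
rewrite mulrA -exprS.
move: ha; rewrite leq_eqVlt => /orP[/eqP ha|ha]; last exact: RS_ab.
rewrite ha hu1 mulrDl -!scalerAl; apply: RSD; apply: RSZ => //.
  by have := RS_ab 1 b p_gt1 hb; rewrite expr1.
apply: RS_mulu2.
by have := RS_ab 0 b (ltn_trans (ltnSn 0) p_gt1) hb; rewrite expr0 mul1r.
Qed.

Lemma RS1 : RS 1.
Proof.
have p0 : (0 < p)%N by apply: ltn_trans p_gt1.
by have := RS_ab 0 0 p0 p0; rewrite expr0 mulr1.
Qed.

Lemma RS_mul z w : RS z -> RS w -> RS (z * w).
Proof.
move=> [g [hg ->]] hw; rewrite mulr_suml; apply: RS_sum => k.
rewrite -scalerAl; apply: RSZ => //; rewrite /mon -mulrA.
have h1 n x : RS x -> RS (u1 ^+ n * x).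
  by elim: n => [|n IH] hx; rewrite ?expr0 ?mul1r // exprS -mulrA; apply: RS_mulu1; apply: IH.
have h2 n x : RS x -> RS (u2 ^+ n * x).
  by elim: n => [|n IH] hx; rewrite ?expr0 ?mul1r // exprS -mulrA; apply: RS_mulu2; apply: IH.
by apply: h1; apply: h2.
Qed.

End Gen.

Section Basis.
Variables (K : fieldType) (H : falgType K).
Hypothesis Hcomm : forall x y : H, x * y = y * x.
Variable p : nat.
Hypothesis p_gt1 : (1 < p)%N.
Variables (u1 u2 : H) (c d e f : K).
Hypotheses (hu1 : u1 ^+ p = c *: u1 + d *: u2) (hu2 : u2 ^+ p = e *: u1 + f *: u2).
Variable s : seq H.
Hypotheses (hs : {subset s <= <<[:: u1; u2]>>%VS}) (hfull : agenv <<s>>%VS = fullv)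
  (hdim : \dim (fullv : {vspace H}) = (p * p)%N).

Let RT := RS K H p (fun _ : K => True) u1 u2.

Definition Xt := [tuple mon K H p u1 u2 (val i) | i < p * p].

Lemma nthX (i : 'I_(p * p)) : Xt`_i = mon K H p u1 u2 i.
Proof. by rewrite -tnth_nth tnth_mktuple. Qed.

Lemma RS_span z : RT z -> z \in <<Xt>>%VS.
Proof.
move=> [g [_ ->]]; apply: memv_suml => k _; apply: memvZ; apply: memv_span.
by rewrite -nthX mem_nth // size_tuple.
Qed.

Lemma span_RS z : z \in <<Xt>>%VS -> RT z.
Proof.
move/coord_span => ->; exists (fun i => coord Xt i z); split=> //.
by apply: eq_bigr => i _; rewrite nthX.
Qed.

Let RTp : forall P : Prop, P -> True := fun _ _ => I.

Lemma X_full : (fullv <= <<Xt>>)%VS.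
Proof.
rewrite -hfull; apply: agenv_sub_modl.
  rewrite -memvE; apply: RS_span; by apply: RS1.
apply/prodvP => u w hu hw.
have sub : (<<s>> <= <<[:: u1; u2]>>)%VS by apply/span_subvP.
have := subvP sub u hu; rewrite span_cons span_seq1 => /memv_addP[y1 /vlineP[a ->] [y2 /vlineP[b ->] ->]].
apply: RS_span; rewrite mulrDl -!scalerAl.
have hw' := span_RS _ hw.
apply: RSD => //; apply: RSZ => //.
  have hh := (RS_mulu1 K H Hcomm p p_gt1 (fun _ => True) I I (fun _ _ _ _ => I) (fun _ _ _ _ => I) u1 u2 c d e f I I I I hu1 hu2). exact: hh _ hw'.
  have hh := (RS_mulu2 K H Hcomm p p_gt1 (fun _ => True) I I (fun _ _ _ _ => I) (fun _ _ _ _ => I) u1 u2 c d e f I I I I hu1 hu2). exact: hh _ hw'.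
Qed.

Lemma X_free : free Xt.
Proof.
apply: (@basis_free _ _ fullv); rewrite basisEdim X_full size_tuple hdim.
exact: leqnn.
Qed.

End Basis.

Lemma powrel (K : fieldType) (H : falgType K) (p : nat) (charK : p \in [pchar K])
  (Hcomm : forall x y : H, x * y = y * x) (pi : K) (i j : int) (th : K)
  (pi0 : pi != 0) (t1 t2 : H) (B : 'M[K]_2)
  (hB1 : t1 ^+ p = B 0 0 *: t1 + B 1 0 *: t2)
  (hB2 : t2 ^+ p = B 0 1 *: t1 + B 1 1 *: t2) :
  let Th := Theta_mx pi i j th in
  let M := invmx Th *m B *m map_mx (fun x => x ^+ p) Th in
  (pi ^ i *: t1 + th *: t2) ^+ p = M 0 0 *: (pi ^ i *: t1 + th *: t2) + M 1 0 *: (pi ^ j *: t2)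
  /\ (pi ^ j *: t2) ^+ p = M 0 1 *: (pi ^ i *: t1 + th *: t2) + M 1 1 *: (pi ^ j *: t2).
Proof.
move=> Th M.
have charH : p \in [pchar H] by rewrite (pchar_lalg H).
have p0 : (0 < p)%N by apply: prime_gt0; exact: (pcharf_prime charK).
have frob (a b : H) : (a + b) ^+ p = a ^+ p + b ^+ p.
  exact: (pFrobenius_autD_comm charH (Hcomm a b)).
have pi0' : pi ^ i != 0 by rewrite expfz_neq0.
have pj0' : pi ^ j != 0 by rewrite expfz_neq0.
have uTh : Th \in unitmx.
  rewrite unitmxE det_trig; last first.
    apply/is_trig_mxP => a b; rewrite !mxE.
    case: a => [[|[|a]] ha] //; case: b => [[|[|b]] hb] //.
  rewrite !big_ord_recl big_ord0 mulr1 !mxE /= unitfE.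
  by rewrite mulf_neq0.
have hTM : Th *m M = B *m map_mx (fun x => x ^+ p) Th.
  by rewrite /M -!mulmxA mulKVmx.
clearbody M.
have e00 := congr1 (fun A : 'M[K]_2 => A 0 0) hTM.
have e10 := congr1 (fun A : 'M[K]_2 => A 1 0) hTM.
have e01 := congr1 (fun A : 'M[K]_2 => A 0 1) hTM.
have e11 := congr1 (fun A : 'M[K]_2 => A 1 1) hTM.
move: e00 e10 e01 e11; rewrite /= !mxE !big_ord_recl !big_ord0 !addr0 !mxE /=.
rewrite !mul0r !addr0 expr0n /= (gtn_eqF p0) !mulr0 !add0r.
have o0 : ord0 = 0 :> 'I_2 by apply/val_inj.
have o1 : lift ord0 ord0 = 1 :> 'I_2 by apply/val_inj.
rewrite !o0 !o1 => e00 e10 e01 e11.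
split.
  rewrite frob !exprZn hB1 hB2 !scalerDr !scalerA addrACA -!scalerDl.
  rewrite -addrA -scalerDl; congr (_ *: _ + _ *: _).
    by rewrite [_ * pi ^ i]mulrC e00; ring.
  by rewrite [M 0 0 * _]mulrC [M 1 0 * _]mulrC e10; ring.
rewrite !exprZn hB2 !scalerDr !scalerA -addrA -scalerDl.
congr (_ *: _ + _ *: _).
  by rewrite [_ * pi ^ i]mulrC e01; ring.
by rewrite [M 0 1 * _]mulrC [M 1 1 * _]mulrC e11; ring.
Qed.

Lemma key (K : fieldType) (p : nat) (charK : p \in [pchar K])
  (v : K -> int) (pi : K) (hv : complete_dvr v pi)
  (H : falgType K) (Hcomm : forall x y : H, x * y = y * x)
  (Delta : H -> tensor H)
  (hpg : primitively_generated Delta)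
  (hrank : \dim (fullv : {vspace H}) = (p ^ 2)%N)
  (t1 t2 : H)
  (hprim : forall t : H, primitive Delta t <-> t \in <<[:: t1; t2]>>%VS)
  (B : 'M[K]_2)
  (hB1 : t1 ^+ p = B 0 0 *: t1 + B 1 0 *: t2)
  (hB2 : t2 ^+ p = B 0 1 *: t1 + B 1 1 *: t2)
  (i j : int) (th : K)
  (hint : integral_cond v p B (Theta_mx pi i j th)) :
  forall z a b, Rsubalg (inR v) (pi ^ i *: t1 + th *: t2) (pi ^ j *: t2) z ->
    z = a *: (pi ^ i *: t1 + th *: t2) + b *: (pi ^ j *: t2) ->
    inR v a /\ inR v b.
Proof.
move=> z a b hz hzab.
have pr : prime p := pcharf_prime charK.
have p_gt1 : (1 < p)%N := prime_gt1 pr.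
have pi0 : pi != 0 := dvr_pi_neq0 hv.
set x := pi ^ i *: t1 + th *: t2.
set y := pi ^ j *: t2.
have [hx hy] := powrel K H p charK Hcomm pi i j th pi0 t1 t2 B hB1 hB2.
set M := invmx _ *m B *m _ in hx hy.
have hM : forall a b, inR v (M a b) by exact: hint.
have R0 := inR0 K v. have R1 := inR1 K v pi hv.
have RD := inRD K v pi hv. have RM := inRM K v pi hv.
have hzRS : RS K H p (inR v) x y z.
  elim: hz => [| |r hr|c d _ hc _ hd|c d _ hc _ hd].
  - exact: (RS_u1 K H p p_gt1 (inR v) R0 R1 x y).
  - exact: (RS_u2 K H p p_gt1 (inR v) R0 R1 x y).
  - rewrite -[r%:A]mulr1 mulr_algl; apply: (RSZ K H p (inR v) RM) => //.
    exact: (RS1 K H p p_gt1 (inR v) R0 R1 x y).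
  - exact: (RSD K H p (inR v) RD).
  - exact: (RS_mul K H Hcomm p p_gt1 (inR v) R0 R1 RD RM x y _ _ _ _
             (hM 0 0) (hM 1 0) (hM 0 1) (hM 1 1) hx hy).
have [s [hs hfull]] := hpg.
have sub12 : (<<[:: t1; t2]>> <= <<[:: x; y]>>)%VS.
  have pj0 : pi ^ j != 0 by rewrite expfz_neq0.
  have pi0' : pi ^ i != 0 by rewrite expfz_neq0.
  have ht2 : t2 = (pi ^ j)^-1 *: y by rewrite /y scalerA mulVf // scale1r.
  have ht1 : t1 = (pi ^ i)^-1 *: (x - th *: t2).
    by rewrite /x addrK scalerA mulVf // scale1r.
  apply/span_subvP => t; rewrite !inE => /orP[] /eqP ->.
    rewrite ht1 ht2; apply: memvZ; apply: memvB; first by apply: memv_span; rewrite !inE eqxx.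
    by apply: memvZ; apply: memvZ; apply: memv_span; rewrite !inE eqxx orbT.
  by rewrite ht2; apply: memvZ; apply: memv_span; rewrite !inE eqxx orbT.
have hs' : {subset s <= <<[:: x; y]>>%VS}.
  by move=> t /hs /hprim ht; apply: (subvP sub12).
have hdim : \dim (fullv : {vspace H}) = (p * p)%N by rewrite hrank mulnn.
have fX := X_free K H Hcomm p p_gt1 x y _ _ _ _ hx hy s hs' hfull hdim.
have hp : (p < p * p)%N by nia.
have h1 : (1 < p * p)%N by nia.
pose jp := Ordinal hp. pose j1 := Ordinal h1.
have Xp : (Xt K H p x y)`_jp = x.
  rewrite nthX /mon /= divnn modnn (ltn_trans (ltnSn 0) p_gt1).
  by rewrite expr1 expr0 mulr1.
have X1 : (Xt K H p x y)`_j1 = y.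
  rewrite nthX /mon /= divn_small // modn_small //.
  by rewrite expr1 expr0 mul1r.
have jp1 : (j1 == jp) = false.
  by apply/negbTE; rewrite -val_eqE /= neq_ltn p_gt1.
have jp1' : (jp == j1) = false by rewrite eq_sym.
case: hzRS => g [hg Ez].
have Ez' : z = \sum_(k < p * p) g k *: (Xt K H p x y)`_k.
  by rewrite Ez; apply: eq_bigr => k _; rewrite nthX.
have cz k : coord (Xt K H p x y) k z = g k by rewrite Ez' coord_sum_free.
have cx k : coord (Xt K H p x y) k x = (jp == k)%:R.
  by have := coord_free jp k fX; rewrite Xp.
have cy k : coord (Xt K H p x y) k y = (j1 == k)%:R.
  by have := coord_free j1 k fX; rewrite X1.
have e1 := cz jp. have e2 := cz j1.
rewrite hzab -/x -/y in e1 e2. clearbody x y.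
rewrite linearD !linearZ /= !cx !cy eqxx in e1.
rewrite linearD !linearZ /= !cx !cy eqxx in e2.
rewrite (_ : (j1 == jp) = false) in e1; last by apply/negbTE; rewrite -val_eqE /= neq_ltn p_gt1.
rewrite (_ : (jp == j1) = false) in e2; last by apply/negbTE; rewrite -val_eqE /= neq_ltn p_gt1 orbT.
rewrite !mulr1 !mulr0 ?addr0 ?add0r in e1 e2.
by rewrite e1 e2; split; apply: hg.
Qed.

Lemma Rsub_trans (K : fieldType) (H : falgType K) (Rp : K -> Prop) (x y x' y' z : H) :
  Rsubalg Rp x' y' x -> Rsubalg Rp x' y' y -> Rsubalg Rp x y z -> Rsubalg Rp x' y' z.
Proof.
move=> hx hy; elim=> //; by [move=> r hr; apply: Rsubalg_scal | move=> *; apply: Rsubalg_add | move=> *; apply: Rsubalg_mul].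
Qed.

Lemma vpos (K : fieldType) (v : K -> int) (pi : K) (hv : complete_dvr v pi) (m n : int) :
  inR v (pi ^ m / pi ^ n) -> n <= m.
Proof.
move/(inR_div K v pi hv) => [/eqP|]; first by rewrite expfz_eq0 (negPf (dvr_pi_neq0 hv)) andbF.
by rewrite (vpiz K v pi hv).
Qed.

Theorem proposition6p4
  (K : fieldType) (p : nat) (charK : p \in [pchar K])
  (v : K -> int) (pi : K) (hv : complete_dvr v pi)
  (H : falgType K) (Hcomm : forall x y : H, x * y = y * x)
  (Delta : H -> tensor H) (eps : H -> K) (S : H -> H)
  (hH : is_hopf Delta eps S)
  (hpg : primitively_generated Delta)
  (hrank : \dim (fullv : {vspace H}) = (p ^ 2)%N)
  (t1 t2 : H)
  (hfree : free [:: t1; t2])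
  (hprim : forall t : H, primitive Delta t <-> t \in <<[:: t1; t2]>>%VS)
  (B : 'M[K]_2)
  (hB1 : t1 ^+ p = B 0 0 *: t1 + B 1 0 *: t2)
  (hB2 : t2 ^+ p = B 0 1 *: t1 + B 1 1 *: t2)
  (i j i' j' : int) (th th' : K)
  (hth : vle v th j) (hth' : vle v th' j')
  (hint : integral_cond v p B (Theta_mx pi i j th))
  (hint' : integral_cond v p B (Theta_mx pi i' j' th')) :
  (forall z : H,
     Rsubalg (inR v) (pi ^ i *: t1 + th *: t2) (pi ^ j *: t2) z <->
     Rsubalg (inR v) (pi ^ i' *: t1 + th' *: t2) (pi ^ j' *: t2) z)
  <-> (i = i' /\ j = j' /\ vge v (th - th') j).
Proof.
have k1 := key K p charK v pi hv H Hcomm Delta hpg hrank t1 t2 hprim B hB1 hB2 i j th hint.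
have k2 := key K p charK v pi hv H Hcomm Delta hpg hrank t1 t2 hprim B hB1 hB2 i' j' th' hint'.
have pi0 : pi != 0 := dvr_pi_neq0 hv.
have pz n : pi ^ n != 0 by rewrite expfz_neq0.
split.
  move=> hEq.
  have hx'A := (hEq (pi ^ i' *: t1 + th' *: t2)).2 (Rsubalg_x _ _ _).
  have hxA' := (hEq (pi ^ i *: t1 + th *: t2)).1 (Rsubalg_x _ _ _).
  have hy'A := (hEq (pi ^ j' *: t2)).2 (Rsubalg_y _ _ _).
  have hyA' := (hEq (pi ^ j *: t2)).1 (Rsubalg_y _ _ _).
  have gen (m n m' n' : int) (u u' : K) :
      pi ^ m' *: t1 + u' *: t2 = (pi ^ m' / pi ^ m) *: (pi ^ m *: t1 + u *: t2)
        + ((u' - (pi ^ m' / pi ^ m) * u) / pi ^ n) *: (pi ^ n *: t2).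
    rewrite scalerDr !scalerA divfK // -addrA -scalerDl divfK //.
    by congr (_ + _ *: _); rewrite addrC subrK.
  have geny (n n' : int) (u : K) : pi ^ n' *: t2 = 0 *: (pi ^ i *: t1 + u *: t2)
        + (pi ^ n' / pi ^ n) *: (pi ^ n *: t2).
    by rewrite scale0r add0r scalerA divfK.
  have ii' : i = i'.
    apply/eqP; rewrite eq_le; apply/andP; split.
      by have [h _] := k1 _ _ _ hx'A (gen i j i' j' th th'); apply: (vpos K v pi hv).
    by have [h _] := k2 _ _ _ hxA' (gen i' j' i j th' th); apply: (vpos K v pi hv).
  subst i'.
  have jj' : j = j'.
    apply/eqP; rewrite eq_le; apply/andP; split.
      by have [_ h] := k1 _ _ _ hy'A (geny j j' th); apply: (vpos K v pi hv).
    by have [_ h] := k2 _ _ _ hyA' (geny j' j th'); apply: (vpos K v pi hv).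
  subst j'.
  do 2 split => //.
  have [_ h] := k2 _ _ _ hxA' (gen i j i j th' th).
  by move: h; rewrite divff // mul1r => /(inR_div K v pi hv).
case=> ii' [jj' hvt]; subst i' j'.
have hr : inR v ((th - th') / pi ^ j) by apply/(inR_div K v pi hv).
have hr' : inR v (- ((th - th') / pi ^ j)).
  by rewrite -mulN1r; apply: (inRM K v pi hv) => //; exact: (inRN1 K v pi hv).
have ex (u u' : K) r : r * pi ^ j = u - u' ->
    pi ^ i *: t1 + u *: t2 = (pi ^ i *: t1 + u' *: t2) + r%:A * (pi ^ j *: t2).
  move=> hr0; rewrite mulr_algl scalerA hr0 -addrA -scalerDl.
  by congr (_ + _ *: _); rewrite addrC subrK.
move=> z; split; apply: Rsub_trans => //; try exact: Rsubalg_y.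
  apply: (eq_ind_r _ _ (ex th th' ((th - th') / pi ^ j) _)).
    by apply: Rsubalg_add; [exact: Rsubalg_x | apply: Rsubalg_mul; [exact: Rsubalg_scal | exact: Rsubalg_y]].
  by rewrite divfK.
apply: (eq_ind_r _ _ (ex th' th (- ((th - th') / pi ^ j)) _)).
  by apply: Rsubalg_add; [exact: Rsubalg_x | apply: Rsubalg_mul; [exact: Rsubalg_scal | exact: Rsubalg_y]].
by rewrite mulNr divfK // opprB.
Qed.
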